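(* Let $\mathcal A$ be a linear time-invariant algorithm with $n$ oracles, state-space realization $(A,B,C,D)$ and transfer function $\hat H(z)$ with entries $h_{ij}(z)$, $1\le i,j\le n$. (a) Suppose $D_{kk}\ne0$ for some $k\in[n]$. Then the transfer function $\hat H'(z)$ of $\mathcal C_k\mathcal A$ has entries $$h'_{ij}(z)=\begin{cases}1/h_{kk}(z)& i=k,\ j=k,\\ -h_{kj}(z)/h_{kk}(z)& i=k,\ j\ne k,\\ h_{ik}(z)/h_{kk}(z)& i\ne k,\ j=k,\\ h_{ij}(z)-h_{ik}(z)h_{kj}(z)/h_{kk}(z)& i\ne k,\ j\ne k.\end{cases}$$ (b) Suppose $D$ is invertible. Then the transfer function $\hat H'(z)$ of $\mathcal C_{[n]}\mathcal A$ satisfies $\hat H'(z)=\hat H^{-1}(z)$.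
   Context: A linear time-invariant algorithm with realization $(A,B,C,D)$ generates $x^{k+1}=Ax^k+Bu^k$, $y^k=Cx^k+Du^k$, $u^k=\phi(y^k)$, where the $n$ oracles are (sub)gradients $\partial f_i$ of convex functions; its transfer function is $\hat H(z)=C(zI-A)^{-1}B+D$. For $\kappa\subseteq[n]=\{1,\dots,n\}$, the conjugation $\mathcal C_\kappa\mathcal A$ is obtained by rewriting $\mathcal A$ to call $\partial f_i^\star=(\partial f_i)^{-1}$ ($f^\star$ the Fenchel conjugate) instead of $\partial f_i$ for each $i\in\kappa$, which swaps the oracle argument and output for those oracles; $\mathcal C_k=\mathcal C_{\{k\}}$. *)

(* Defs.v *)
From HB Require Import structures.
From mathcomp Require Import all_boot all_order all_algebra.
Set Implicit Arguments. Unset Strict Implicit. Unset Printing Implicit Defensive.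
Import GRing.Theory.
Local Open Scope ring_scope.

(* A linear time-invariant algorithm with state dimension p and n (scalar)
   oracles, given by a state-space realization (A,B,C,D):
     x^{k+1} = A x^k + B u^k,  y^k = C x^k + D u^k,  u^k_i in df_i(y^k_i). *)
Record lti (F : fieldType) (p n : nat) := LTI {
  ltiA : 'M[F]_p;
  ltiB : 'M[F]_(p, n);
  ltiC : 'M[F]_(n, p);
  ltiD : 'M[F]_n }.

(* Value of the transfer function H(z) = C (zI - A)^{-1} B + D at z
   (meaningful when zI - A is invertible). *)
Definition transfer (F : fieldType) (p n : nat) (S : lti F p n) (z : F)
  : 'M[F]_n :=
  ltiC S *m invmx (z%:M - ltiA S) *m ltiB S + ltiD S.

Definition selmx (F : fieldType) (n : nat) (kappa : {set 'I_n}) : 'M[F]_n :=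
  diag_mx (\row_i (i \in kappa)%:R).

(* Conjugation C_kappa: the oracles i in kappa are replaced by their inverses,
   i.e. the new oracle argument is y'_i = u_i and its output is u'_i = y_i
   (for i notin kappa, y'_i = y_i, u'_i = u_i).  With E = selmx kappa and
   Ebar = 1 - E: u' = E y + Ebar u, y' = E u + Ebar y.  Solving
   y = C x + D u for u: u' = E C x + M u with M = E D + Ebar, so
   u = M^{-1} (u' - E C x), which gives the realization below
   (well defined when M is invertible, i.e. D_{kappa,kappa} invertible). *)
Definition conj_lti (F : fieldType) (p n : nat) (kappa : {set 'I_n})
  (S : lti F p n) : lti F p n :=
  let E := selmx F kappa in
  let Eb := 1%:M - E in
  let Mi := invmx (E *m ltiD S + Eb) in
  let N := E + Eb *m ltiD S in
  LTI (ltiA S - ltiB S *m Mi *m E *m ltiC S)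
      (ltiB S *m Mi)
      (Eb *m ltiC S - N *m Mi *m E *m ltiC S)
      (N *m Mi).

(* Main.v *)
Require Import Defs.
From mathcomp Require Import all_boot all_order all_algebra.
Import GRing.Theory.
Local Open Scope ring_scope.

Lemma selT_entry (F : fieldType) n k (P Q : 'M[F]_n) i j :
  (P *m (selmx F [set k] *m Q + (1%:M - selmx F [set k]))) i j
  = (if j == k then 0 else P i j) + P i k * Q k j.
Proof.
rewrite mulmxDr mulmxBr mulmx1 mulmxA /selmx mul_mx_diag !mxE.
rewrite (bigD1 k) //= big1 => [|l /negbTE hl]; last by rewrite !mxE in_set1 hl mulr0 mul0r.
rewrite !mxE in_set1 eqxx mulr1 addr0; case: eqP => [->|/eqP/negbTE hjk].
  by rewrite in_set1 eqxx mulr1 subrr addr0 add0r.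
by rewrite in_set1 hjk mulr0 subr0 addrC.
Qed.

Lemma selR_entry (F : fieldType) n k (Q : 'M[F]_n) i j :
  (selmx F [set k] + (1%:M - selmx F [set k]) *m Q) i j
  = if i == k then (j == k)%:R else Q i j.
Proof.
rewrite mulmxBl mul1mx /selmx mul_diag_mx !mxE in_set1.
case: eqP => [->|_] /=; last by rewrite mul0rn mul0r subr0 add0r.
rewrite mulr1n mul1r subrr addr0 eq_sym; by case: (j == k).
Qed.

Lemma selT1 (F : fieldType) n : selmx F [set: 'I_n] = 1%:M.
Proof. by apply/matrixP => i j; rewrite !mxE in_setT. Qed.

Lemma zmod_rearr (V : zmodType) (a N b c : V) : a + N + ((b - a) + c) = b + c + N.
Proof. by rewrite addrACA [a + _]addrC subrK [N + c]addrC addrA. Qed.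

Lemma key (F : fieldType) p n (kappa : {set 'I_n}) (S : lti F p n) z :
  (selmx F kappa *m ltiD S + (1%:M - selmx F kappa)) \in unitmx ->
  z%:M - ltiA S \in unitmx -> z%:M - ltiA (conj_lti kappa S) \in unitmx ->
  transfer (conj_lti kappa S) z *m (selmx F kappa *m transfer S z + (1%:M - selmx F kappa))
  = selmx F kappa + (1%:M - selmx F kappa) *m transfer S z.
Proof.
case: S => A B C D; rewrite /transfer /conj_lti /=.
set E := selmx F kappa; set Eb := 1%:M - E; set M := E *m D + Eb.
set Mi := invmx M; set N := E + Eb *m D => UM UZ UZ'.
set K := Mi *m E *m C.
have hZ' : z%:M - (A - B *m Mi *m E *m C) = (z%:M - A) + B *m K.
  by rewrite opprD opprK addrA !mulmxA.
rewrite hZ' in UZ' *.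
set R := invmx (z%:M - A); set R' := invmx (z%:M - A + B *m K).
have key : R' *m B *m K *m R = R - R'.
  have h1 : R' *m (z%:M - A) + R' *m B *m K = 1%:M.
    by rewrite -mulmxA -mulmxDr mulVmx.
  have h2 : R' + R' *m B *m K *m R = R.
    have := congr1 (mulmx^~ R) h1; rewrite mulmxDl mul1mx -mulmxA mulmxV // mulmx1.
    by [].
  have -> : R - R' = (R' + R' *m B *m K *m R) - R' by rewrite h2.
  by rewrite [R' + _]addrC addrK.
have hT : E *m (C *m R *m B + D) + Eb = M + E *m C *m R *m B.
  by rewrite mulmxDr -addrA addrC !mulmxA.
rewrite hT.
have hMi : Mi *m M = 1%:M by rewrite mulVmx.
have eK : N *m Mi *m E *m C = N *m K by rewrite !mulmxA.
have hKd : Mi *m (E *m C *m R *m B) = K *m R *m B by rewrite !mulmxA.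
rewrite eK.
have hN : N = E + Eb *m D by [].
clearbody K R R' Mi M N Eb E.
set C' := Eb *m C - N *m K.
have hC : C' = Eb *m C - N *m K by []. clearbody C'.
rewrite (_ : C' *m R' *m (B *m Mi) + N *m Mi = (C' *m R' *m B + N) *m Mi); last first.
  by rewrite mulmxDl !mulmxA.
rewrite -mulmxA mulmxDr hMi hKd mulmxDr mulmx1 mulmxDl.
rewrite (_ : C' *m R' *m B *m (K *m R *m B) = C' *m (R - R') *m B); last first.
  by rewrite -key !mulmxA.
rewrite mulmxBr mulmxBl.
rewrite zmod_rearr hC !mulmxBl -!mulmxA subrK hN.
by rewrite !mulmxDr addrA [_ + E]addrC -!addrA !mulmxA.
Qed.

Theorem corollary8p2 (F : fieldType) (p n : nat) (S : lti F p n) :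
  (forall k : 'I_n, ltiD S k k != 0 ->
     forall z : F,
       z%:M - ltiA S \in unitmx ->
       z%:M - ltiA (conj_lti [set k] S) \in unitmx ->
       let h := transfer S z in
       forall i j : 'I_n,
         transfer (conj_lti [set k] S) z i j =
           if i == k then
             if j == k then 1 / h k k else - (h k j / h k k)
           else
             if j == k then h i k / h k k
             else h i j - h i k * h k j / h k k)
  /\
  (ltiD S \in unitmx ->
     forall z : F,
       z%:M - ltiA S \in unitmx ->
       z%:M - ltiA (conj_lti [set: 'I_n] S) \in unitmx ->
       transfer (conj_lti [set: 'I_n] S) z = invmx (transfer S z)).
Proof.
split.
  move=> k Dk z UZ UZ' h i j.
  have UM : selmx F [set k] *m ltiD S + (1%:M - selmx F [set k]) \in unitmx.
    pose X : 'M[F]_n := \matrix_(a, b) if a == k then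
        (if b == k then 1 / ltiD S k k else - (ltiD S k b / ltiD S k k))
        else (a == b)%:R.
    have hX : X *m (selmx F [set k] *m ltiD S + (1%:M - selmx F [set k])) = 1%:M.
      apply/matrixP => a b; rewrite selT_entry !mxE.
      case: (eqVneq a k) => [->|hak]; case: (eqVneq b k) => [->|hbk] //=.
      - by rewrite add0r mul1r eqxx mulVf.
      - by rewrite eqxx mul1r [_^-1 * _]mulrC addNr.
      - by rewrite mul0r addr0 (negbTE hak).
      - by rewrite mul0r addr0.
    by case: (mulmx1_unit hX).
  have hk := key _ _ _ _ _ _ UM UZ UZ'.
  set H' := transfer (conj_lti [set k] S) z.
  have ent' a b : (if b == k then 0 else H' a b) + H' a k * h k b
      = if a == k then (b == k)%:R else h a b.
    by rewrite -selT_entry hk selR_entry.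
  have ekk := ent' k k; rewrite eqxx add0r in ekk.
  have hkk : h k k != 0.
    by apply/eqP => e; move: ekk; rewrite e mulr0 => /eqP; rewrite eq_sym oner_eq0.
  have col a : H' a k = (if a == k then 1 else h a k) / h k k.
    have := ent' a k; rewrite eqxx add0r => <-; by rewrite mulfK.
  case: (eqVneq j k) => [->|hjk].
    by rewrite col; case: (eqVneq i k).
  have := ent' i j; rewrite (negbTE hjk) col /= mulr0n => e.
  have -> : H' i j = (if i == k then 0 else h i j) - (if i == k then 1 else h i k) / h k k * h k j.
    by rewrite -e addrK.
  case: (i =P k) => [eik|_]; [subst i|]; rewrite ?eqxx /=.
    by rewrite sub0r mul1r mulrC.
  by rewrite mulrAC.
move=> UD z UZ UZ'.
have UM : selmx F [set: 'I_n] *m ltiD S + (1%:M - selmx F [set: 'I_n]) \in unitmx.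
  by rewrite selT1 mul1mx subrr addr0.
have := key _ _ _ _ _ _ UM UZ UZ'; rewrite selT1 mul1mx subrr addr0 mul0mx addr0 => hH.
have [_ UH] := mulmx1_unit hH.
by rewrite -[LHS]mulmx1 -(mulmxV UH) mulmxA hH mul1mx.
Qed.
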